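(* Let $k \ge 2$ and let $n_1 < n_2 < \dots < n_k$ be positive integers. If the set $\{\rho_g(x) \mid x \in \langle n_1, \dots, n_k\rangle,\ x \neq 0\}$ has a limit point, then this limit point is $n_k/n_1$.
   Context: $\langle n_1,\dots,n_k\rangle$ is the additive submonoid of $\mathbb{N}$ generated by $n_1,\dots,n_k$. For nonzero $x\in\langle n_1,\dots,n_k\rangle$, the generalized set of lengths with respect to the distinguished generators $n_1,\dots,n_k$ is $\mathsf{L}_g(x)=\{c_1+\dots+c_k \mid c_1,\dots,c_k\in\mathbb{N},\ \sum_{i=1}^k c_i n_i = x\}$, and the generalized elasticity is $\rho_g(x)=\max \mathsf{L}_g(x)/\min\mathsf{L}_g(x)$. *)

(* Defs.v *)
From mathcomp Require Import all_boot all_order all_algebra.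
From mathcomp Require Import reals.
Set Implicit Arguments. Unset Strict Implicit. Unset Printing Implicit Defensive.
Import Order.TTheory GRing.Theory Num.Theory.

(* Generators n_1 < ... < n_k are represented by n : nat -> nat, using the
   indices 0, ..., k-1 (so n_1 = n 0 and n_k = n k.-1). *)

Definition in_monoid (k : nat) (n : nat -> nat) (x : nat) : Prop :=
  exists c : nat -> nat, \sum_(i < k) c i * n i = x.

Definition Lg (k : nat) (n : nat -> nat) (x l : nat) : Prop :=
  exists c : nat -> nat, \sum_(i < k) c i * n i = x /\ \sum_(i < k) c i = l.

(* Factorizations are
   enumerated with coefficients c_i <= x; since every generator is >= 1, any
   c with sum c_i n_i = x has c_i <= x, so this enumerates all of L_g(x). *)
Definition lengths (k : nat) (n : nat -> nat) (x : nat) : seq nat :=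
  [seq \sum_(i < k) (nat_of_ord (c i))
  | c : {ffun 'I_k -> 'I_x.+1} <- enum {: {ffun 'I_k -> 'I_x.+1}}
  & \sum_(i < k) (nat_of_ord (c i)) * n i == x].

(* max L_g(x) and min L_g(x) (lengths are all <= x, so x is a neutral
   default for minn when L_g(x) is nonempty). *)
Definition maxLg (k : nat) (n : nat -> nat) (x : nat) : nat :=
  \max_(l <- lengths k n x) l.
Definition minLg (k : nat) (n : nat -> nat) (x : nat) : nat :=
  \big[minn/x]_(l <- lengths k n x) l.

Definition rho_g (R : realType) (k : nat) (n : nat -> nat) (x : nat) : R :=
  ((maxLg k n x)%:R / (minLg k n x)%:R)%R.

Definition is_limit_point_rho (R : realType) (k : nat) (n : nat -> nat) (L : R) : Prop :=
  forall eps : R, (0 < eps)%R ->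
    exists x : nat, in_monoid k n x /\ x <> 0%N /\
      (0 < `|rho_g R k n x - L| < eps)%R.
Arguments rho_g R k n x : clear implicits.
Arguments is_limit_point_rho R k n L : clear implicits.

(* Main.v *)
Require Import Defs.
From mathcomp Require Import all_boot all_order all_algebra.
From mathcomp Require Import reals zify ring lra.
Import Order.TTheory GRing.Theory Num.Theory.

Section Nat.
Variables (k : nat) (n : nat -> nat).
Hypothesis hk : (2 <= k)%N.
Hypothesis hpos : forall i, (i < k)%N -> (0 < n i)%N.
Hypothesis hinc : forall i j, (i < j)%N -> (j < k)%N -> (n i < n j)%N.

Lemma n_ge0 i : (i < k)%N -> (n 0 <= n i)%N.
Proof.
move=> hi; case: i hi => [|i] hi //; by apply: ltnW; apply: hinc.
Qed.

Lemma n_lek i : (i < k)%N -> (n i <= n k.-1)%N.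
Proof.
move=> hi; have: (i <= k.-1)%N by lia.
rewrite leq_eqVlt => /orP [/eqP -> //|h]; apply: ltnW; apply: hinc => //; lia.
Qed.

Lemma fact_lo (F : 'I_k -> nat) :
  ((\sum_(i < k) F i) * n 0 <= \sum_(i < k) F i * n i)%N.
Proof. rewrite big_distrl /=; apply: leq_sum => i _; rewrite leq_mul2l n_ge0 ?orbT //. Qed.

Lemma fact_hi (F : 'I_k -> nat) :
  (\sum_(i < k) F i * n i <= (\sum_(i < k) F i) * n k.-1)%N.
Proof. rewrite big_distrl /=; apply: leq_sum => i _; rewrite leq_mul2l n_lek ?orbT //. Qed.

Lemma term_le (F : 'I_k -> nat) (j : 'I_k) : (F j <= \sum_(i < k) F i)%N.
Proof. by rewrite (bigD1 j) //= leq_addr. Qed.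

Lemma in_lengths (c : nat -> nat) x :
  \sum_(i < k) c i * n i = x -> \sum_(i < k) c i \in lengths k n x.
Proof.
move=> hx.
pose f := [ffun i : 'I_k => (inord (c i) : 'I_x.+1)].
have cf : forall i : 'I_k, nat_of_ord (f i) = c i.
  move=> i; rewrite ffunE inordK // ltnS.
  apply: leq_trans (_ : c i * n i <= x)%N.
    by rewrite leq_pmulr // hpos.
  rewrite -hx; exact: (term_le (fun i : 'I_k => c i * n i) i).
apply/mapP; exists f.
  rewrite mem_filter mem_enum andbT; apply/eqP; apply: etrans hx.
  by apply: eq_bigr => i _; rewrite cf.
by apply: eq_bigr => i _; rewrite cf.
Qed.

Lemma lengths_bounds x l : l \in lengths k n x ->
  (l * n 0 <= x)%N /\ (x <= l * n k.-1)%N.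
Proof.
move=> /mapP [f]; rewrite mem_filter mem_enum andbT => /eqP hx el; subst l.
split.
  by have := fact_lo (fun i => nat_of_ord (f i)); rewrite hx.
by have := fact_hi (fun i => nat_of_ord (f i)); rewrite hx.
Qed.

Lemma sum_delta (j : nat) (F : nat -> nat) : (j < k)%N ->
  \sum_(i < k) (i == j :> nat) * F i = F j.
Proof.
move=> hj; rewrite (bigD1 (Ordinal hj)) //= eqxx mul1n big1 ?addn0 //.
move=> i hi; case: eqP => // e; exfalso; move: hi; apply/negP/negPn/eqP.
by apply: val_inj.
Qed.

Lemma reduce (c : nat -> nat) (j : nat) : (j < k)%N ->
  let g := n j in
  let T := \sum_(i < k) (c i %/ g) * n i in
  exists c' : nat -> nat,
    \sum_(i < k) c' i * n i = \sum_(i < k) c i * n i /\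
    \sum_(i < k) c' i = T + \sum_(i < k) (c i %% g) /\
    T * g + \sum_(i < k) (c i %% g) * n i = \sum_(i < k) c i * n i.
Proof.
move=> hj g T.
have e3 : T * g + \sum_(i < k) (c i %% g) * n i = \sum_(i < k) c i * n i.
  rewrite /T big_distrl -big_split /=; apply: eq_bigr => i _.
  by rewrite {3}(divn_eq (c i) g) mulnDl mulnAC.
exists (fun i => c i %% g + (i == j) * T); split; [|split] => //.
  rewrite -e3.
  under eq_bigr => i _ do rewrite mulnDl.
  rewrite big_split /= addnC; congr (_ + _).
  under eq_bigr => i _ do rewrite -mulnA.
  by rewrite (@sum_delta j (fun i => T * n i) hj).
rewrite big_split /= addnC; congr (_ + _).
by rewrite (@sum_delta j (fun _ => T) hj).
Qed.

Lemma sum_mod_le (c : nat -> nat) g : (0 < g)%N ->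
  (\sum_(i < k) (c i %% g) * n i <= k * g * n k.-1)%N.
Proof.
move=> hg; rewrite -mulnA -[k in (_ <= k * _)%N]card_ord -sum_nat_const.
apply: leq_sum => i _; apply: leq_mul; first exact: ltnW (ltn_pmod _ hg).
exact: n_lek.
Qed.

Lemma sum_mod_le' (c : nat -> nat) g : (0 < g)%N ->
  (\sum_(i < k) (c i %% g) <= k * g)%N.
Proof.
move=> hg; rewrite -[k in (_ <= k * _)%N]card_ord -sum_nat_const.
apply: leq_sum => i _; exact: ltnW (ltn_pmod _ hg).
Qed.

Lemma max_bounds x : in_monoid k n x ->
  (maxLg k n x * n 0 <= x)%N /\ (x <= maxLg k n x * n 0 + k * n 0 * n k.-1)%N.
Proof.
move=> [c hc]; split.
  rewrite /maxLg big_seq; apply: (big_ind (fun y => y * n 0 <= x)%N) => //.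
    move=> y z hy hz /=; by case: (leqP y z).
  by move=> l /lengths_bounds [].
have hk0 : (0 < k)%N by lia.
have [c' [h1 [h2 h3]]] := @reduce c _ hk0.
have hin := @in_lengths _ _ h1.
rewrite hc in hin.
have hM : (\sum_(i < k) c' i <= maxLg k n x)%N.
  by rewrite /maxLg; apply: (@leq_bigmax_seq _ _ xpredT (fun l => l)).
have := @sum_mod_le c _ (hpos _ hk0).
rewrite hc in h3; rewrite h2 in hM => h4.
have : ((\sum_(i < k) (c i %/ n 0) * n i) * n 0 <= maxLg k n x * n 0)%N.
  by rewrite leq_mul2r; apply/orP; right; apply: leq_trans hM; apply: leq_addr.
lia.
Qed.

Lemma minn_le (s : seq nat) x l : l \in s -> (\big[minn/x]_(y <- s) y <= l)%N.
Proof.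
elim: s => // y s IH; rewrite in_cons big_cons => /orP [/eqP ->|h].
  exact: geq_minl.
exact: leq_trans (geq_minr _ _) (IH h).
Qed.

Lemma min_bounds x : in_monoid k n x ->
  (x <= minLg k n x * n k.-1)%N /\ (minLg k n x * n k.-1 <= x + k * n k.-1 * n k.-1)%N.
Proof.
have hk0 : (k.-1 < k)%N by lia.
have hb := hpos _ hk0.
move=> [c hc]; split.
  rewrite /minLg big_seq; apply: (big_ind (fun y => x <= y * n k.-1)%N) => //.
  - by rewrite leq_pmulr.
  - move=> y z hy hz /=; by case: (leqP y z).
  by move=> l /lengths_bounds [].
have [c' [h1 [h2 h3]]] := @reduce c _ hk0.
have hin := @in_lengths _ _ h1.
rewrite hc in hin.
have hM : (minLg k n x <= \sum_(i < k) c' i)%N by apply: minn_le.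
have := @sum_mod_le' c _ hb.
rewrite hc in h3; rewrite h2 in hM => h4.
have : (minLg k n x * n k.-1 <= (\sum_(i < k) (c i %/ n k.-1) * n i + \sum_(i < k) c i %% n k.-1) * n k.-1)%N.
  by rewrite leq_mul2r hM orbT.
nia.
Qed.

End Nat.
Local Open Scope ring_scope.
Lemma real_bounds (R : realType) (M m a b x C1 C2 : nat) :
  (M * a <= x)%N -> (x <= M * a + C1)%N -> (x <= m * b)%N -> (m * b <= x + C2)%N ->
  (0 < x)%N -> (0 < a)%N ->
  (M%:R / m%:R <= b%:R / a%:R :> R) /\
  (b%:R / a%:R - M%:R / m%:R <= ((C1 + C2) * b)%:R / (a%:R * x%:R) :> R).
Proof.
move=> h1 h2 h3 h4 hx ha.
have hm : (0 < m)%N by nia.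
have hb : (0 < b)%N by nia.
have n1 : (M * a <= m * b)%N by lia.
have n2 : (b * m * x <= a * M * x + (C1 + C2) * m * b)%N by nia.
have r1 : (M%:R * a%:R <= m%:R * b%:R :> R) by rewrite -!natrM ler_nat.
have r2 : (b%:R * m%:R * x%:R <= a%:R * M%:R * x%:R + (C1 + C2)%:R * m%:R * b%:R :> R).
  by rewrite -!natrM -natrD ler_nat.
have ra : (0 < a%:R :> R) by rewrite ltr0n.
have rm : (0 < m%:R :> R) by rewrite ltr0n.
have rx : (0 < x%:R :> R) by rewrite ltr0n.
have e : b%:R / a%:R - M%:R / m%:R = (b%:R * m%:R - a%:R * M%:R) / (a%:R * m%:R) :> R.
  by field; apply/andP; split; rewrite lt0r_neq0.
split.
  rewrite -subr_ge0 e; apply: divr_ge0; last by rewrite mulr_ge0 // ltW.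
  by rewrite subr_ge0; lra.
rewrite e ler_pdivrMr ?mulr_gt0 // mulrAC ler_pdivlMr ?mulr_gt0 // natrM.
nra.
Qed.

Lemma fin_eps (R : realType) (f : nat -> R) (L : R) N :
  exists e : R, 0 < e /\ forall x, (x < N)%N -> f x != L -> e <= `|f x - L|.
Proof.
elim: N => [|N [e [he IH]]]; first by exists 1; split.
case: (eqVneq (f N) L) => hN.
  exists e; split => // x; rewrite ltnS leq_eqVlt => /orP [/eqP ->|]; last exact: IH.
  by rewrite hN eqxx.
exists (Num.min e `|f N - L|); split.
  by rewrite lt_min he normr_gt0 subr_eq0 hN.
move=> x; rewrite ltnS leq_eqVlt => /orP [/eqP ->|hx] hne; first by rewrite ge_min lexx orbT.
by rewrite ge_min IH.
Qed.

Theorem lemma5p3 (R : realType) (k : nat) (n : nat -> nat) :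
  (2 <= k)%N ->
  (forall i, (i < k)%N -> (0 < n i)%N) ->
  (forall i j, (i < j)%N -> (j < k)%N -> (n i < n j)%N) ->
  forall L : R, is_limit_point_rho R k n L ->
  L = ((n k.-1)%:R / (n 0%N)%:R)%R.
Proof.
move=> hk hpos hinc L hL.
have ha : (0 < n 0%N)%N by apply: hpos; lia.
pose C := ((k * n 0%N * n k.-1 + k * n k.-1 * n k.-1) * n k.-1)%N.
have close : forall x, in_monoid k n x -> x <> 0%N ->
    rho_g R k n x <= (n k.-1)%:R / (n 0%N)%:R /\
    (n k.-1)%:R / (n 0%N)%:R - rho_g R k n x <= C%:R / ((n 0%N)%:R * x%:R).
  move=> x hx hx0.
  have [m1 m2] := @max_bounds k n hk hpos hinc x hx.
  have [m3 m4] := @min_bounds k n hk hpos hinc x hx.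
  have hx' : (0 < x)%N by lia.
  rewrite /rho_g /C; by have := @real_bounds R _ _ _ _ _ _ _ m1 m2 m3 m4 hx' ha.
case: (eqVneq L ((n k.-1)%:R / (n 0%N)%:R)) => // hne; exfalso.
set B := (n k.-1)%:R / (n 0%N)%:R : R in close hne.
pose d : R := `|B - L|.
have hd : 0 < d by rewrite normr_gt0 subr_eq0 eq_sym.
have hA : 0 < (n 0%N)%:R :> R by rewrite ltr0n.
pose N := Num.Def.archi_bound (2 * C%:R / ((n 0%N)%:R * d) : R).
have hN : 2 * C%:R / ((n 0%N)%:R * d) < N%:R :> R.
  by apply: archi_boundP; rewrite divr_ge0 // ?mulr_ge0 // ltW.
have [e [he hE]] := @fin_eps R (rho_g R k n) L N.
have heps : 0 < Num.min e (d / 2) by rewrite lt_min he divr_gt0.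
have [x [hx [hx0 /andP [h0 hlt]]]] := hL _ heps.
case: (ltnP x N) => hxN.
  have hne' : rho_g R k n x != L by rewrite -subr_eq0 -normr_gt0.
  have := hE x hxN hne'.
  move: hlt; rewrite lt_min => /andP [h1 _] h2.
  by move: (lt_le_trans h1 h2); rewrite ltxx.
have [c1 c2] := close x hx hx0.
have hxr : 0 < x%:R :> R by rewrite ltr0n; lia.
have hNx : N%:R <= x%:R :> R by rewrite ler_nat.
have hC : C%:R / ((n 0%N)%:R * x%:R) <= d / 2.
  rewrite ler_pdivrMr ?mulr_gt0 //.
  move: hN; rewrite ltr_pdivrMr ?mulr_gt0 // => hN.
  have hh : N%:R * ((n 0%N)%:R * d) <= x%:R * ((n 0%N)%:R * d) :> R.
    by rewrite ler_wpM2r // ltW // mulr_gt0.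
  nra.
have tri : d <= `|B - rho_g R k n x| + `|rho_g R k n x - L|.
  have := ler_normD (B - rho_g R k n x) (rho_g R k n x - L).
  by rewrite addrA subrK.
move: hlt; rewrite lt_min => /andP [_ h3].
rewrite ger0_norm ?subr_ge0 // in tri.
lra.
Qed.
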